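(* Let $X$ be a real Hilbert space, $C\subseteq X$ a closed convex set, $T:C\to C$ a nonexpansive map, $x_0\in C$, and let $p\in C$ be a fixed point of $T$. Let $N\in\mathbb{N}\setminus\{0\}$ satisfy $N\geq 2\|x_0-p\|$. For every $k\in\mathbb{N}$ and every monotone function $f:\mathbb{N}\to\mathbb{N}$ there exist $n\in\mathbb{N}$ with $n\leq 24N\big(w_{f,N}^{(R)}(0)+1\big)^2$ and $x\in C\cap B_N$ such that $$\|T(x)-x\|\leq\frac{1}{f(n)+1}\quad\text{and}\quad \forall y\in C\cap B_N\ \left(\|T(y)-y\|\leq \frac{1}{n+1}\ \to\ \langle x_0-x,\,y-x\rangle\leq\frac{1}{k+1}\right),$$ where $R:=4N^4(k+1)^2$ and $w_{f,N}(m):=\max\{f(24N(m+1)^2),\,24N(m+1)^2\}$.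
   Context: $B_N:=\{x\in X:\ \|x-p\|\leq N\}$ denotes the closed ball of radius $N$ centered at the fixed point $p$. A function $f:\mathbb{N}\to\mathbb{N}$ is called monotone if $f(n)\leq f(n+1)$ for all $n\in\mathbb{N}$. For $g:\mathbb{N}\to\mathbb{N}$, $g^{(R)}$ denotes the $R$-fold composition of $g$ with itself ($g^{(0)}$ is the identity). A map $T$ is nonexpansive if $\|T(x)-T(y)\|\leq\|x-y\|$ for all $x,y$. *)

(* Defs.v *)
From Stdlib Require Import Reals Lra Lia.
Open Scope R_scope.

Record HilbertSpace := {
  hcar :> Type;
  hzero : hcar;
  hadd : hcar -> hcar -> hcar;
  hopp : hcar -> hcar;
  hscal : R -> hcar -> hcar;
  hinner : hcar -> hcar -> R;
  hadd_assoc : forall x y z, hadd x (hadd y z) = hadd (hadd x y) z;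
  hadd_comm : forall x y, hadd x y = hadd y x;
  hadd_zero : forall x, hadd x hzero = x;
  hadd_opp : forall x, hadd x (hopp x) = hzero;
  hscal_one : forall x, hscal 1 x = x;
  hscal_assoc : forall a b x, hscal a (hscal b x) = hscal (a * b) x;
  hscal_add_r : forall a x y, hscal a (hadd x y) = hadd (hscal a x) (hscal a y);
  hscal_add_l : forall a b x, hscal (a + b) x = hadd (hscal a x) (hscal b x);
  hinner_sym : forall x y, hinner x y = hinner y x;
  hinner_add_l : forall x y z, hinner (hadd x y) z = hinner x z + hinner y z;
  hinner_scal_l : forall a x y, hinner (hscal a x) y = a * hinner x y;
  hinner_pos : forall x, 0 <= hinner x x;
  hinner_def : forall x, hinner x x = 0 -> x = hzero;
  hcomplete : forall u : nat -> hcar,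
    (forall eps, 0 < eps -> exists M : nat, forall m n : nat,
        (M <= m)%nat -> (M <= n)%nat ->
        sqrt (hinner (hadd (u m) (hopp (u n))) (hadd (u m) (hopp (u n)))) < eps) ->
    exists l : hcar, forall eps, 0 < eps -> exists M : nat, forall n : nat,
        (M <= n)%nat ->
        sqrt (hinner (hadd (u n) (hopp l)) (hadd (u n) (hopp l))) < eps
}.

Arguments hzero {h}.
Arguments hadd {h}.
Arguments hopp {h}.
Arguments hscal {h}.
Arguments hinner {h}.

Definition hsub {X : HilbertSpace} (x y : X) : X := hadd x (hopp y).
Definition hnorm {X : HilbertSpace} (x : X) : R := sqrt (hinner x x).

Definition hclosed_set {X : HilbertSpace} (C : X -> Prop) : Prop :=
  forall (u : nat -> X) (l : X),
    (forall n, C (u n)) ->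
    (forall eps, 0 < eps -> exists M : nat, forall n : nat,
        (M <= n)%nat -> hnorm (hsub (u n) l) < eps) ->
    C l.

Definition hconvex_set {X : HilbertSpace} (C : X -> Prop) : Prop :=
  forall x y t, C x -> C y -> 0 <= t <= 1 ->
    C (hadd (hscal t x) (hscal (1 - t) y)).

(* T : C -> C nonexpansive, represented by T : X -> X mapping C into C. *)
Definition maps_into {X : HilbertSpace} (C : X -> Prop) (T : X -> X) : Prop :=
  forall x, C x -> C (T x).

Definition nonexpansive_on {X : HilbertSpace} (C : X -> Prop) (T : X -> X) : Prop :=
  forall x y, C x -> C y -> hnorm (hsub (T x) (T y)) <= hnorm (hsub x y).

Definition in_ball {X : HilbertSpace} (p : X) (N : nat) (x : X) : Prop :=
  hnorm (hsub x p) <= INR N.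

Definition monotone (f : nat -> nat) : Prop := forall n, (f n <= f (S n))%nat.

Definition w_fN (f : nat -> nat) (N : nat) (m : nat) : nat :=
  Nat.max (f (24 * N * (m + 1) ^ 2)%nat) (24 * N * (m + 1) ^ 2)%nat.

Definition iterate (g : nat -> nat) (R : nat) : nat -> nat := Nat.iter R g.

(* Main.v *)
Require Import Defs.
From Stdlib Require Import Reals Lra Lia Classical.
Open Scope R_scope.

Lemma inner_zero_l {X : HilbertSpace} (y : X) : hinner hzero y = 0.
Proof. pose proof (hinner_add_l X hzero hzero y) as H. rewrite hadd_zero in H. lra. Qed.

Lemma inner_opp_l {X : HilbertSpace} (x y : X) : hinner (hopp x) y = - hinner x y.
Proof. pose proof (hinner_add_l X x (hopp x) y) as H. rewrite hadd_opp, inner_zero_l in H. lra. Qed.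

Lemma inner_add_r {X : HilbertSpace} (x y z : X) : hinner x (hadd y z) = hinner x y + hinner x z.
Proof. rewrite hinner_sym, hinner_add_l, (hinner_sym _ y), (hinner_sym _ z). reflexivity. Qed.

Lemma inner_scal_r {X : HilbertSpace} a (x y : X) : hinner x (hscal a y) = a * hinner x y.
Proof. rewrite hinner_sym, hinner_scal_l, (hinner_sym _ y). reflexivity. Qed.

Lemma inner_opp_r {X : HilbertSpace} (x y : X) : hinner x (hopp y) = - hinner x y.
Proof. rewrite hinner_sym, inner_opp_l, (hinner_sym _ y). reflexivity. Qed.

Lemma inner_sub_l {X : HilbertSpace} (x y z : X) : hinner (hsub x y) z = hinner x z - hinner y z.
Proof. unfold hsub. rewrite hinner_add_l, inner_opp_l. ring. Qed.

Lemma inner_sub_r {X : HilbertSpace} (x y z : X) : hinner z (hsub x y) = hinner z x - hinner z y.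
Proof. unfold hsub. rewrite inner_add_r, inner_opp_r. ring. Qed.

Hint Rewrite @inner_sub_l @inner_sub_r @hinner_add_l @inner_add_r @hinner_scal_l
  @inner_scal_r @inner_opp_l @inner_opp_r : hexp.

Lemma hnorm_sq {X : HilbertSpace} (u : X) : hnorm u ^ 2 = hinner u u.
Proof. unfold hnorm. rewrite pow2_sqrt; [reflexivity|apply hinner_pos]. Qed.

Lemma hnorm_pos {X : HilbertSpace} (u : X) : 0 <= hnorm u.
Proof. apply sqrt_pos. Qed.

Lemma norm_le {X : HilbertSpace} (u : X) r : 0 <= r -> hinner u u <= r^2 -> hnorm u <= r.
Proof. intros H1 H2. unfold hnorm. rewrite <- (sqrt_pow2 r H1). apply sqrt_le_1_alt; auto. Qed.

Lemma norm_scale {X : HilbertSpace} (u v : X) c : 0 <= c ->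
  hinner u u = c^2 * hinner v v -> hnorm u = c * hnorm v.
Proof.
  intros Hc H. unfold hnorm. rewrite H, sqrt_mult.
  - rewrite sqrt_pow2; auto.
  - apply pow2_ge_0.
  - apply hinner_pos.
Qed.

Lemma cs {X : HilbertSpace} (u v : X) : hinner u v <= hnorm u * hnorm v.
Proof.
  destruct (Req_dec (hinner u u) 0) as [Hu|Hu].
  { apply hinner_def in Hu. subst u. rewrite inner_zero_l.
    apply Rmult_le_pos; apply sqrt_pos. }
  destruct (Req_dec (hinner v v) 0) as [Hv|Hv].
  { apply hinner_def in Hv. subst v. rewrite hinner_sym, inner_zero_l.
    apply Rmult_le_pos; apply sqrt_pos. }
  pose proof (hnorm_sq u) as Ha. pose proof (hnorm_sq v) as Hb.
  pose proof (hnorm_pos u). pose proof (hnorm_pos v).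
  assert (0 < hnorm u). { destruct (Rle_lt_or_eq_dec 0 (hnorm u)); auto.
    exfalso; apply Hu; rewrite <- Ha, <- e; ring. }
  assert (0 < hnorm v). { destruct (Rle_lt_or_eq_dec 0 (hnorm v)); auto.
    exfalso; apply Hv; rewrite <- Hb, <- e; ring. }
  pose proof (hinner_pos X (hsub (hscal (hnorm v) u) (hscal (hnorm u) v))) as P.
  autorewrite with hexp in P. rewrite (hinner_sym X v u) in P.
  rewrite <- Ha, <- Hb in P.
  assert (0 < hnorm u * hnorm v) by (apply Rmult_lt_0_compat; auto).
  nra.
Qed.

Lemma inner_sub_sym {X : HilbertSpace} (a b : X) :
  hinner (hsub a b) (hsub a b) = hinner (hsub b a) (hsub b a).
Proof. autorewrite with hexp. ring. Qed.

Lemma norm_sub_sym {X : HilbertSpace} (a b : X) : hnorm (hsub a b) = hnorm (hsub b a).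
Proof. unfold hnorm. rewrite inner_sub_sym. reflexivity. Qed.

Lemma tri {X : HilbertSpace} (a b c : X) :
  hnorm (hsub a c) <= hnorm (hsub a b) + hnorm (hsub b c).
Proof.
  assert (E: hinner (hsub a c) (hsub a c) = hinner (hsub a b) (hsub a b)
     + 2 * hinner (hsub a b) (hsub b c) + hinner (hsub b c) (hsub b c)).
  { autorewrite with hexp. try rewrite (hinner_sym _ b a). try rewrite (hinner_sym _ c a).
    try rewrite (hinner_sym _ c b). ring. }
  pose proof (cs (hsub a b) (hsub b c)).
  pose proof (hnorm_pos (hsub a b)). pose proof (hnorm_pos (hsub b c)).
  apply norm_le. lra.
  rewrite E, <- !hnorm_sq. nra.
Qed.

Lemma conv_id {X : HilbertSpace} (x y w : X) t :
  let z := hadd (hscal t y) (hscal (1-t) x) in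
  hinner (hsub z w) (hsub z w) = (1-t) * hinner (hsub x w) (hsub x w)
    + t * hinner (hsub y w) (hsub y w) - t * (1-t) * hinner (hsub x y) (hsub x y).
Proof.
  intro z. unfold z. autorewrite with hexp.
  try rewrite (hinner_sym _ y x). try rewrite (hinner_sym _ w x). try rewrite (hinner_sym _ w y).
  ring.
Qed.

Lemma approx_conv {X : HilbertSpace} (T : X -> X) (x y : X) (t eps : R) :
  0 <= t <= 1 -> 0 <= eps ->
  let z := hadd (hscal t y) (hscal (1-t) x) in
  hnorm (hsub (T x) (T z)) <= hnorm (hsub x z) ->
  hnorm (hsub (T y) (T z)) <= hnorm (hsub y z) ->
  hnorm (hsub (T x) x) <= eps -> hnorm (hsub (T y) y) <= eps ->
  hinner (hsub (T z) z) (hsub (T z) z) <= eps^2 + eps * hnorm (hsub x y).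
Proof.
  intros Ht He z N1 N2 A1 A2.
  assert (Ex : hnorm (hsub x z) = t * hnorm (hsub x y)).
  { apply norm_scale. lra. unfold z. autorewrite with hexp.
    try rewrite (hinner_sym _ y x). ring. }
  assert (Ey : hnorm (hsub y z) = (1-t) * hnorm (hsub x y)).
  { apply norm_scale. lra. unfold z. autorewrite with hexp.
    try rewrite (hinner_sym _ y x). ring. }
  pose proof (tri x (T x) (T z)) as T1. rewrite (norm_sub_sym x (T x)) in T1.
  pose proof (tri y (T y) (T z)) as T2. rewrite (norm_sub_sym y (T y)) in T2.
  rewrite inner_sub_sym. unfold z. rewrite conv_id. fold z.
  rewrite <- !hnorm_sq.
  set (A := hnorm (hsub x (T z))) in *. set (B := hnorm (hsub y (T z))) in *.
  set (D := hnorm (hsub x y)) in *.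
  assert (0 <= A) by apply hnorm_pos. assert (0 <= B) by apply hnorm_pos.
  assert (0 <= D) by apply hnorm_pos.
  assert (HA : A <= eps + t * D) by lra.
  assert (HB : B <= eps + (1-t) * D) by lra.
  assert (G1 : (1-t) * A^2 <= (1-t) * (eps + t*D)^2).
  { apply Rmult_le_compat_l. lra. apply pow_incr. lra. }
  assert (G2 : t * B^2 <= t * (eps + (1-t)*D)^2).
  { apply Rmult_le_compat_l. lra. apply pow_incr. lra. }
  assert (G3 : 0 <= eps * D * (1 - 2*t)^2).
  { apply Rmult_le_pos. apply Rmult_le_pos; lra. apply pow2_ge_0. }
  nra.
Qed.

Definition Fset {X : HilbertSpace} (C : X -> Prop) (T : X -> X) (p : X) (N m : nat) (z : X) :=
  C z /\ in_ball p N z /\ hnorm (hsub (T z) z) <= 1 / (INR m + 1).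

Lemma inv_mono (a b : nat) : (b <= a)%nat -> 1 / (INR a + 1) <= 1 / (INR b + 1).
Proof.
  intro H. apply le_INR in H. pose proof (pos_INR b).
  unfold Rdiv. rewrite !Rmult_1_l. apply Rinv_le_contravar; lra.
Qed.

Lemma arith1 (Nr M : R) : 1 <= Nr -> 1 <= M ->
  (1/(24*Nr*M^2+1))^2 + 1/(24*Nr*M^2+1) * (2*Nr) <= (1/M)^2.
Proof.
  intros HN HM.
  assert (HM2 : 1 <= M^2) by nra.
  set (e := 1/(24*Nr*M^2+1)).
  assert (He : e * (24*Nr*M^2+1) = 1) by (unfold e; field; nra).
  assert (He0 : 0 < e) by (unfold e; apply Rdiv_lt_0_compat; nra).
  apply Rmult_le_reg_r with (M^2). nra.
  replace ((1/M)^2 * M^2) with 1 by (field; lra).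
  set (q := Nr * M^2 * e).
  assert (Hq : 24 * q + e = 1) by (unfold q; nra).
  assert (Hq0 : 0 <= q) by (unfold q; apply Rmult_le_pos; nra).
  assert (H1 : M^2 * e <= q) by (unfold q; nra).
  assert (He1 : e <= 1) by lra.
  assert (H2 : M^2 * e^2 <= M^2 * e) by nra.
  nra.
Qed.

Lemma INR_24 : INR 24 = 24. Proof. simpl. ring. Qed.
Lemma INR_4 : INR 4 = 4. Proof. simpl. ring. Qed.

Theorem mainTheorem2 (X : HilbertSpace) (C : X -> Prop) (T : X -> X) (x0 p : X)
  (N : nat)
  (HCcl : hclosed_set C) (HCcv : hconvex_set C)
  (HTC : maps_into C T) (HTne : nonexpansive_on C T)
  (Hx0 : C x0) (Hp : C p) (HTp : T p = p)
  (HN0 : (0 < N)%nat) (HN : 2 * hnorm (hsub x0 p) <= INR N) :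
  forall (k : nat) (f : nat -> nat), monotone f ->
  exists (n : nat) (x : X),
    (n <= 24 * N * (iterate (w_fN f N) (4 * N ^ 4 * (k + 1) ^ 2) 0 + 1) ^ 2)%nat /\
    C x /\ in_ball p N x /\
    hnorm (hsub (T x) x) <= 1 / (INR (f n) + 1) /\
    (forall y : X, C y -> in_ball p N y ->
       hnorm (hsub (T y) y) <= 1 / (INR n + 1) ->
       hinner (hsub x0 x) (hsub y x) <= 1 / (INR k + 1)).
Proof.
  intros k f Hf.
  apply NNPP; intro H.
  set (R := (4 * N ^ 4 * (k + 1) ^ 2)%nat) in *.
  set (m := fun i => iterate (w_fN f N) i 0) in *.
  set (Nr := INR N).
  assert (HNr : 1 <= Nr) by (unfold Nr; apply (le_INR 1); lia).
  set (a := 1 / (INR k + 1)).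
  assert (Hk : 1 <= INR k + 1) by (pose proof (pos_INR k); lra).
  assert (Ha0 : 0 < a) by (unfold a; apply Rdiv_lt_0_compat; lra).
  assert (Ha1 : a <= 1).
  { unfold a. unfold Rdiv. rewrite Rmult_1_l. rewrite <- Rinv_1. apply Rinv_le_contravar; lra. }
  set (t := a / (4 * Nr^2)).
  assert (Ht4 : t * (4 * Nr^2) = a) by (unfold t; field; lra).
  assert (Ht0 : 0 < t) by (unfold t; apply Rdiv_lt_0_compat; nra).
  assert (Ht1 : t <= 1) by nra.
  assert (HmS : forall i, m (S i) = w_fN f N (m i)) by reflexivity.
  assert (Hwm : forall j, (m j <= w_fN f N (m j))%nat).
  { intro j. unfold w_fN. rewrite Nat.pow_2_r.
    assert (24 * N * ((m j + 1) * (m j + 1)) <=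
            Nat.max (f (24 * N * ((m j + 1) * (m j + 1)))) (24 * N * ((m j + 1) * (m j + 1))))%nat
      by apply Nat.le_max_r.
    nia. }
  assert (Hmono : forall i j, (i <= j)%nat -> (m i <= m j)%nat).
  { intros i j Hij. induction Hij. lia. rewrite HmS. specialize (Hwm m0). lia. }
  assert (Step : forall i z, (i < R)%nat -> Fset C T p N (m (S i)) z ->
     exists z', Fset C T p N (m i) z' /\
       hinner (hsub x0 z') (hsub x0 z') <= hinner (hsub x0 z) (hsub x0 z) - t * a).
  { intros i z Hi [Cz [Bz Az]].
    set (n := (24 * N * (m i + 1) ^ 2)%nat).
    assert (Hfn : (f n <= m (S i))%nat) by (rewrite HmS; apply Nat.le_max_l).
    assert (Hnn : (n <= m (S i))%nat) by (rewrite HmS; apply Nat.le_max_r).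
    assert (Hb : (n <= 24 * N * (iterate (w_fN f N) R 0 + 1) ^ 2)%nat).
    { assert (HmR : (m i <= m R)%nat) by (apply Hmono; lia).
      unfold n. change (iterate (w_fN f N) R 0) with (m R).
      rewrite !Nat.pow_2_r. apply Nat.mul_le_mono_l. apply Nat.mul_le_mono; lia. }
    assert (Hy : exists y, C y /\ in_ball p N y /\ hnorm (hsub (T y) y) <= 1 / (INR n + 1)
               /\ hinner (hsub x0 z) (hsub y z) > a).
    { apply NNPP; intro Hc. apply H. exists n, z. split; [exact Hb|].
      split; [exact Cz|]. split; [exact Bz|]. split.
      - eapply Rle_trans; [exact Az|]. apply inv_mono; exact Hfn.
      - intros y Cy By Ay. apply Rnot_lt_le. intro Hlt. apply Hc. exists y; auto. }
    destruct Hy as [y [Cy [By [Ay Iy]]]].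
    set (z' := hadd (hscal t y) (hscal (1-t) z)).
    assert (Cz' : C z') by (apply HCcv; auto; lra).
    assert (HD : hnorm (hsub z y) <= 2 * Nr).
    { pose proof (tri z p y). rewrite (norm_sub_sym p y) in H0.
      unfold in_ball in Bz, By. fold Nr in Bz, By. lra. }
    exists z'. split; [split; [exact Cz'|split]|].
    - unfold in_ball. apply norm_le. apply pos_INR. fold Nr.
      unfold z'. rewrite conv_id. rewrite <- !hnorm_sq.
      unfold in_ball in Bz, By. fold Nr in Bz, By.
      pose proof (hnorm_pos (hsub z p)). pose proof (hnorm_pos (hsub y p)).
      assert (hnorm (hsub z p) ^2 <= Nr^2) by (apply pow_incr; lra).
      assert (hnorm (hsub y p) ^2 <= Nr^2) by (apply pow_incr; lra).
      assert (0 <= t * (1 - t) * hnorm (hsub z y) ^ 2).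
      { apply Rmult_le_pos. apply Rmult_le_pos; lra. apply pow2_ge_0. }
      nra.
    - set (eps := 1 / (INR n + 1)).
      assert (Heps : 0 <= eps) by (unfold eps; apply Rlt_le, Rdiv_lt_0_compat; pose proof (pos_INR n); lra).
      assert (Az2 : hnorm (hsub (T z) z) <= eps).
      { eapply Rle_trans; [exact Az|]. apply inv_mono; exact Hnn. }
      pose proof (approx_conv T z y t eps ltac:(lra) Heps) as AC. simpl in AC. fold z' in AC.
      specialize (AC (HTne z z' Cz Cz') (HTne y z' Cy Cz') Az2 Ay).
      apply norm_le. pose proof (pos_INR (m i)). apply Rlt_le, Rdiv_lt_0_compat; lra.
      eapply Rle_trans; [exact AC|].
      pose proof (hnorm_pos (hsub z y)).
      assert (eps * hnorm (hsub z y) <= eps * (2 * Nr)) by (apply Rmult_le_compat_l; lra).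
      eapply Rle_trans; [| apply (arith1 Nr (INR (m i) + 1)); [lra | pose proof (pos_INR (m i)); lra]].
      assert (En : INR n = 24 * Nr * (INR (m i) + 1)^2).
      { unfold n, Nr. rewrite !mult_INR, pow_INR, plus_INR, INR_24. reflexivity. }
      assert (Ee : eps = 1 / (24 * Nr * (INR (m i) + 1) ^ 2 + 1)) by (unfold eps; rewrite En; reflexivity). rewrite <- Ee. lra.
    - assert (E : hinner (hsub x0 z') (hsub x0 z') = hinner (hsub x0 z) (hsub x0 z)
          - 2 * t * hinner (hsub x0 z) (hsub y z) + t^2 * hinner (hsub y z) (hsub y z)).
      { unfold z'. autorewrite with hexp.
        try rewrite (hinner_sym _ y x0). try rewrite (hinner_sym _ z x0).
        try rewrite (hinner_sym _ z y). ring. }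
      rewrite E. rewrite <- (hnorm_sq (hsub y z)). rewrite (norm_sub_sym y z).
      pose proof (hnorm_pos (hsub z y)).
      assert (hnorm (hsub z y) ^ 2 <= 4 * Nr^2) by (replace (4 * Nr^2) with ((2*Nr)^2) by ring; apply pow_incr; lra).
      assert (t^2 * hnorm (hsub z y) ^ 2 <= t^2 * (4 * Nr^2)) by (apply Rmult_le_compat_l; nra).
      assert (t * hinner (hsub x0 z) (hsub y z) >= t * a) by nra.
      nra. }
  assert (Ind : forall j, (j <= R)%nat -> exists z, Fset C T p N (m (R - j)%nat) z /\
     hinner (hsub x0 z) (hsub x0 z) <= Nr^2/4 - INR j * (t * a)).
  { induction j as [|j IH]; intro Hj.
    - exists p. rewrite Nat.sub_0_r. split.
      + assert (E0 : hnorm (hsub p p) = 0).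
        { unfold hnorm. replace (hinner (hsub p p) (hsub p p)) with 0. apply sqrt_0.
          autorewrite with hexp. ring. }
        split; [exact Hp|split].
        * unfold in_ball. rewrite E0. apply pos_INR.
        * rewrite HTp, E0. apply Rlt_le, Rdiv_lt_0_compat; pose proof (pos_INR (m R)); lra.
      + rewrite <- hnorm_sq. pose proof (hnorm_pos (hsub x0 p)). fold Nr in HN.
        simpl INR. nra.
    - destruct (IH ltac:(lia)) as [z [Fz Dz]].
      replace (R - j)%nat with (S (R - S j)) in Fz by lia.
      destruct (Step (R - S j)%nat z ltac:(lia) Fz) as [z' [Fz' Dz']].
      exists z'. split; [exact Fz'|]. rewrite S_INR. lra. }
  destruct (Ind R (le_n R)) as [z [_ Dz]].
  assert (ER : INR R * (t * a) = Nr^2).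
  { unfold R. rewrite !mult_INR, !pow_INR, plus_INR, INR_4. fold Nr. simpl (INR 1).
    unfold t, a. field. lra. }
  pose proof (hinner_pos X (hsub x0 z)). nra.
Qed.
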